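(* The clique number of the skeleton of $\mathrm{PYR}(n)$ satisfies $\omega(\mathrm{PYR}(n))=\Theta(n^2)$ as $n\to\infty$; that is, there are constants $c_1,c_2>0$ such that $c_1 n^2\le \omega(\mathrm{PYR}(n))\le c_2 n^2$ for all sufficiently large $n$.
   Context: Let $K_n$ be the complete undirected graph on vertex set $\{1,\dots,n\}$ with edge set $E$. A Hamiltonian cycle $\langle 1,i_1,\dots,i_r,n,j_1,\dots,j_{n-r-2}\rangle$ is called a pyramidal tour if $i_1<i_2<\dots<i_r$ and $j_1>j_2>\dots>j_{n-r-2}$; tours are undirected. Let $PT_n$ be the set of all pyramidal tours. For $x\in PT_n$ its characteristic vector $x^v\in\mathbb{R}^E$ has $x^v_e=1$ if edge $e$ lies in $x$ and $0$ otherwise. The pyramidal tours polytope is $\mathrm{PYR}(n)=\operatorname{conv}\{x^v : x\in PT_n\}$. The skeleton of a polytope is the graph whose vertices are the polytope's vertices and whose edges are its one-dimensional faces. $\omega(\mathrm{PYR}(n))$ denotes the clique number (maximum number of pairwise adjacent vertices) of the skeleton of $\mathrm{PYR}(n)$. *)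

(* Defs.v *)
From HB Require Import structures.
From mathcomp Require Import all_boot all_order all_algebra.
Set Implicit Arguments. Unset Strict Implicit. Unset Printing Implicit Defensive.
Import Order.TTheory GRing.Theory Num.Theory.
Local Open Scope ring_scope.

(* Vertices of K_n are 0,...,n-1 (standing for 1,...,n).  An edge {i,j} is
   encoded by the pair (i,j) with i < j; vectors in R^E are finite functions
   on 'I_n * 'I_n whose entries with i >= j are ignored. *)

Definition pyramidal (n : nat) (s : seq nat) : Prop :=
  (3 <= n)%N /\ perm_eq s (iota 0 n) /\
  exists a b : seq nat,
    s = 0%N :: a ++ n.-1 :: b /\ sorted ltn a /\ sorted [rel x y | (y < x)%N] b.

Definition tour_edge (s : seq nat) (i j : nat) : bool :=
  (j == next s i) || (i == next s j).

Definition charvec (R : realFieldType) (n : nat) (s : seq nat)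
  : {ffun 'I_n * 'I_n -> R} :=
  [ffun e : 'I_n * 'I_n =>
     if ((e.1 < e.2)%N && tour_edge s e.1 e.2) then (1 : R) else 0].

Definition PYRpts (R : realFieldType) (n : nat) (v : {ffun 'I_n * 'I_n -> R}) : Prop :=
  exists s, pyramidal n s /\ v = charvec R n s.

Definition dotE (R : realFieldType) (n : nat) (c v : {ffun 'I_n * 'I_n -> R}) : R :=
  \sum_(e : 'I_n * 'I_n | (e.1 < e.2)%N) c e * v e.

Definition is_vertex (R : realFieldType) (n : nat)
  (P : {ffun 'I_n * 'I_n -> R} -> Prop) (v : {ffun 'I_n * 'I_n -> R}) : Prop :=
  P v /\ exists c, forall z, P z -> z != v -> dotE c z < dotE c v.

(* x, y are adjacent in the skeleton of conv(P): the segment [x,y] (x <> y)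
   is a face of conv(P), i.e. the set of maximizers of some linear functional *)
Definition adjacent (R : realFieldType) (n : nat)
  (P : {ffun 'I_n * 'I_n -> R} -> Prop) (x y : {ffun 'I_n * 'I_n -> R}) : Prop :=
  x != y /\ is_vertex P x /\ is_vertex P y /\
  exists c, dotE c x = dotE c y /\
    forall z, P z -> z != x -> z != y -> dotE c z < dotE c x.

Definition is_clique (R : realFieldType) (n : nat)
  (P : {ffun 'I_n * 'I_n -> R} -> Prop) (Q : seq {ffun 'I_n * 'I_n -> R}) : Prop :=
  uniq Q /\ (forall x, x \in Q -> is_vertex P x) /\
  (forall x y, x \in Q -> y \in Q -> x != y -> adjacent P x y).

(* Main.v *)
Require Import Defs.
From HB Require Import structures.
From mathcomp Require Import all_boot all_order all_algebra.
From mathcomp Require Import zify lra.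
Import Order.TTheory GRing.Theory Num.Theory.

Set Implicit Arguments. Unset Strict Implicit. Unset Printing Implicit Defensive.
Ltac clia := repeat match goal with H : _ |- _ => clear H end; lia.

Lemma bigmax_wit (I : eqType) (r : seq I) (P : pred I) (G : I -> nat) :
  0 < \max_(i <- r | P i) G i ->
  exists i, [/\ i \in r, P i & G i = \max_(i <- r | P i) G i].
Proof.
elim: r => [|h t IH]; first by rewrite big_nil.
rewrite big_cons; case: ifP => Ph; last first.
  move=> /IH [i [it Pi Gi]]; exists i; split => //; by rewrite inE it orbT.
rewrite /maxn; case: (ltnP (G h) (\max_(j <- t | P j) G j)) => Hle /=.
  move=> /IH [i [it Pi Gi]].
  by exists i; split => //; rewrite inE it orbT.
move=> _; exists h; split => //.
by rewrite inE eqxx.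
Qed.

Definition fd (T : Type) (f : T -> nat -> bool) (K : nat) (x y : T) : nat :=
  (find (fun k => f x k != f y k) (iota 1 K)).+1.

Lemma fd_before T f K (x y : T) k : 1 <= k -> k < fd f K x y -> f x k = f y k.
Proof.
rewrite /fd; set m := find _ _ => k1 kl.
have mK : m <= size (iota 1 K) by apply: find_size.
have km : k.-1 < m by lia.
have := before_find 0 km.
rewrite size_iota in mK.
rewrite nth_iota; last by lia.
have -> : 1 + k.-1 = k by lia.
by move=> /= /negbFE /eqP.
Qed.

Lemma fd_at T f K (x y : T) : fd f K x y <= K -> f x (fd f K x y) != f y (fd f K x y).
Proof.
rewrite /fd => H.
have H' : find (fun k => f x k != f y k) (iota 1 K) < size (iota 1 K) by rewrite size_iota.
have := nth_find 0 (_ : has (fun k => f x k != f y k) (iota 1 K)).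
rewrite has_find => /(_ H').
by rewrite nth_iota ?add1n // -(size_iota 1 K).
Qed.

Lemma fd_le T f K (x y : T) k : 1 <= k <= K -> f x k != f y k -> fd f K x y <= k.
Proof.
move=> /andP[k1 kK] Hd; rewrite leqNgt; apply/negP => Hlt.
by move: Hd; rewrite (fd_before k1 Hlt) eqxx.
Qed.

Lemma fd_gt0 T f K (x y : T) : 0 < fd f K x y.
Proof. by []. Qed.

Lemma fdC T f K (x y : T) : fd f K x y = fd f K y x.
Proof. by rewrite /fd; congr (_.+1); apply: eq_find => k; rewrite eq_sym. Qed.

Lemma fd_eq T f K (x y : T) d : 1 <= d <= K -> f x d != f y d ->
  (forall k, 1 <= k < d -> f x k = f y k) -> fd f K x y = d.
Proof.
move=> Hd Hne Hb; apply/eqP; rewrite eqn_leq (fd_le Hd Hne) /=.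
rewrite leqNgt; apply/negP => Hlt.
have Hle : fd f K x y <= K by move/andP: Hd => [_ ?]; lia.
by move: (fd_at Hle); rewrite Hb ?eqxx //; apply/andP; split => //.
Qed.

Definition wit T f K (y x : T) := (fd f K y x <= K) && f x (fd f K y x).
Definition uf (T : eqType) f K (F : seq T) (x : T) :=
  \max_(y <- F | wit f K y x) fd f K y x.
Definition qf (T : eqType) f K (F : seq T) (x : T) :=
  \max_(k <- iota 1 K | (k < uf f K F x) && f x k) k.

Lemma count_bound (T : eqType) (f : T -> nat -> bool) K (F : seq T) :
  uniq F ->
  (forall x y, x \in F -> y \in F -> x != y ->
     exists k, 1 <= k <= K /\ f x k != f y k) ->
  (forall x y, x \in F -> y \in F -> x != y -> forall c d1 d2,
     1 <= d1 -> d1 < c -> c < d2 -> d2 <= K ->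
     f x c -> f y c -> f x d1 != f y d1 -> f x d2 != f y d2 -> False) ->
  size F <= K.+1 * K.+1.
Proof.
move=> uF injF clq.
pose psi x := (uf f K F x, qf f K F x).
have uf_ge : forall x y, y \in F -> wit f K y x -> fd f K y x <= uf f K F x.
  by move=> x y yF w; rewrite /uf; apply: (leq_bigmax_seq y (P := fun y => wit f K y x) (F := fun y => fd f K y x)).
have uf_wit : forall x, 0 < uf f K F x ->
    exists y, [/\ y \in F, wit f K y x & fd f K y x = uf f K F x].
  by move=> x /bigmax_wit.
have qf_ge : forall x k, 1 <= k <= K -> k < uf f K F x -> f x k -> k <= qf f K F x.
  move=> x k Hk Hu Hf; rewrite /qf; apply: (leq_bigmax_seq k (P := fun k => (k < uf f K F x) && f x k) (F := fun k => k)).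
    by rewrite mem_iota; lia.
  by rewrite Hu Hf.
have qf_wit : forall x, 0 < qf f K F x -> f x (qf f K F x) && (qf f K F x < uf f K F x).
  move=> x /bigmax_wit [k [kI /andP [H1 H2] Hk]].
  by rewrite /qf -Hk H1 H2.
have inj : {in F &, injective psi}.
  move=> x y xF yF [Hu Hq]; apply/eqP; apply/negP => /negP xy.
  have [k [Hk Hne]] := injF _ _ xF yF xy.
  have dK : fd f K x y <= K by apply: leq_trans (fd_le Hk Hne) _; case/andP: Hk.
  have dne := fd_at dK.
  set d := fd f K x y in dK dne.
  have wxy : f y d -> wit f K x y by move=> Hy; rewrite /wit -/d dK Hy.
  have wyx : f x d -> wit f K y x by move=> Hx; rewrite /wit fdC -/d dK Hx.
  have d1 : 0 < d by [].
  case: (posnP (uf f K F x)) => Hu0.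
    case Hy: (f y d).
      by have := uf_ge _ _ xF (wxy Hy); rewrite -Hu Hu0 -/d; lia.
    have Hx : f x d by move: dne; rewrite Hy; case: (f x d).
    by have := uf_ge _ _ yF (wyx Hx); rewrite Hu0 fdC -/d; lia.
  have [a [aF wa Ha]] := uf_wit _ Hu0.
  have [b [bF wb Hb]] := uf_wit _ (ltac:(by rewrite -Hu) : 0 < uf f K F y).
  set U := uf f K F x in Hu Hu0 Ha.
  move: wa wb; rewrite /wit Ha Hb -Hu => /andP [UK fxU] /andP [_ fyU].
  have aU : f a U != f x U by rewrite -Ha fd_at // Ha.
  have faU : f a U = false by move: aU; rewrite fxU; case: (f a U).
  have fa_before : forall k, 1 <= k < U -> f a k = f x k.
    by move=> k0 /andP [k1 kU]; apply: (fd_before (f := f) (K := K) k1); rewrite Ha.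
  have xy_before : forall k, 1 <= k < d -> f x k = f y k.
    by move=> k0 /andP [k1 kd]; apply: (fd_before (f := f) (K := K) k1).
  case: (ltngtP d U) => HdU; last first.
  - by move: dne; rewrite HdU fxU fyU.
  - case Hy: (f y d).
      by have := uf_ge _ _ xF (wxy Hy); rewrite -/d -Hu leqNgt HdU.
    have Hx : f x d by move: dne; rewrite Hy; case: (f x d).
    by have := uf_ge _ _ yF (wyx Hx); rewrite fdC -/d -/U leqNgt HdU.
  (* d < U *)
  have Qd : d <= qf f K F x.
    case Hx: (f x d); first by apply: qf_ge => //; rewrite d1 dK.
    have Hy : f y d by move: dne; rewrite Hx; case: (f y d).
    by rewrite Hq; apply: qf_ge => //; rewrite ?d1 ?dK // -Hu.
  set Q := qf f K F x in Hq Qd.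
  have /andP [fxQ QU] := qf_wit x (leq_trans d1 Qd).
  have /andP [fyQ _] := qf_wit y (ltac:(rewrite -Hq; exact: leq_trans d1 Qd)).
  rewrite -Hq -/Q in fyQ.
  have dQ : d < Q.
    rewrite ltn_neqAle Qd andbT; apply/eqP => E.
    by move: dne; rewrite E fxQ fyQ.
  have fad : f a d != f y d by rewrite fa_before ?dne // d1 HdU.
  have ay : a != y by apply/eqP => E; move: fad; rewrite E eqxx.
  apply: (clq _ _ aF yF ay Q d U) => //.
  - by rewrite fa_before // (leq_trans d1 Qd) QU.
  - by rewrite faU fyU.
have sub : {subset map psi F <= [seq (i, j) | i <- iota 0 K.+1, j <- iota 0 K.+1]}.
  move=> p /mapP [x xF ->]; apply/allpairsP; exists (uf f K F x, qf f K F x) => /=.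
  have Hm : forall m, m <= K -> m \in 0 :: iota 1 K.
    by move=> m mK; rewrite -[0 :: iota 1 K]/(iota 0 K.+1) mem_iota.
  split => //; apply: Hm.
    by apply/bigmax_leqP_seq => y _ /andP [].
  by apply/bigmax_leqP_seq => k; rewrite mem_iota add1n ltnS => /andP [_ ->].
have := uniq_leq_size (ltac:(by rewrite (map_inj_in_uniq inj)) : uniq (map psi F)) sub.
by rewrite size_map size_allpairs !size_iota.
Qed.

Definition cutp n (kp : nat -> bool) k := (k == 0) || (k == n.-2) || kp k.
Definition arcb n kp p q :=
  [&& cutp n kp p, cutp n kp q & all (fun k => ~~ cutp n kp k) (iota p.+1 (q - p.+1))].
Definition ED n kp i j :=
  if j == i.+1 then (i == 0) || (i == n.-2) || ~~ kp i else arcb n kp i j.-1.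
Definition CVc (R : realFieldType) n (kp : nat -> bool) : {ffun 'I_n * 'I_n -> R} :=
  [ffun e : 'I_n * 'I_n => if (e.1 < e.2)%N && ED n kp e.1 e.2 then 1%R else 0%R].
Definition rc (R : realFieldType) n (v : {ffun 'I_n * 'I_n -> R}) k :=
  [exists e : 'I_n * 'I_n, [&& (e.1 == k :> nat), (e.2 == k.+1 :> nat) & v e == 0%R]].

Lemma rcE (R : realFieldType) n (v : {ffun 'I_n * 'I_n -> R}) k (H1 : k < n) (H2 : k.+1 < n) :
  rc v k = (v (Ordinal H1, Ordinal H2) == 0%R).
Proof.
apply/existsP/idP => [[[i j] /and3P [/eqP ik /eqP jk]] | H].
  have -> : i = Ordinal H1 by apply: val_inj.
  by have -> : j = Ordinal H2 by apply: val_inj.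
by exists (Ordinal H1, Ordinal H2); rewrite /= !eqxx.
Qed.

Lemma arcb_ext n k1 k2 p q : p <= q ->
  (forall k, p <= k <= q -> cutp n k1 k = cutp n k2 k) -> arcb n k1 p q = arcb n k2 p q.
Proof.
move=> pq H; rewrite /arcb H ?leqnn ?pq // [cutp n k1 q]H ?leqnn ?pq //.
congr [&& _, _ & _]; apply: eq_in_all => k; rewrite mem_iota => Hk.
by rewrite H //; lia.
Qed.

Lemma arcb_cross n (kp : nat -> bool) (p q c : nat) : cutp n kp c -> p < c < q -> arcb n kp p q = false.
Proof.
move=> Hc Hpq; rewrite /arcb; apply/negP => /and3P [_ _ /allP /(_ c)].
by rewrite mem_iota Hc; move=> /(_ ltac:(lia)).
Qed.

Lemma cutp_ext n k1 k2 k : (forall k, 0 < k < n.-2 -> k1 k = k2 k) -> k <= n.-2 ->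
  cutp n k1 k = cutp n k2 k.
Proof.
move=> H kn; rewrite /cutp; case: (k =P 0) => //= /eqP k0.
case: (k =P n.-2) => //= /eqP kn2; rewrite H //; lia.
Qed.

Lemma ED_ext n k1 k2 i j : (forall k, 0 < k < n.-2 -> k1 k = k2 k) -> i < j -> j < n ->
  ED n k1 i j = ED n k2 i j.
Proof.
move=> H ij jn; rewrite /ED; case: (j =P i.+1) => [ji|/eqP ji].
  case: (i =P 0) => //= /eqP i0; case: (i =P n.-2) => //= /eqP in2.
  by rewrite H //; lia.
apply: arcb_ext; first lia.
move=> k Hk; apply: cutp_ext => //; lia.
Qed.

Lemma CVc_ext (R : realFieldType) n k1 k2 : (forall k, 0 < k < n.-2 -> k1 k = k2 k) ->
  CVc R n k1 = CVc R n k2.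
Proof.
move=> H; apply/ffunP => -[i j]; rewrite !ffunE /=.
case: (ltnP i j) => //= ij; by rewrite (ED_ext H ij (ltn_ord j)).
Qed.

Lemma CVcE (R : realFieldType) n kp (e : 'I_n * 'I_n) :
  CVc R n kp e = ((((e.1 < e.2)%N && ED n kp e.1 e.2) : nat)%:R)%R.
Proof. by rewrite ffunE; case: ifP. Qed.

Lemma rc_CVc (R : realFieldType) n kp k : 0 < k < n.-2 -> rc (CVc R n kp) k = kp k.
Proof.
move=> Hk; have H1 : k < n by lia.
have H2 : k.+1 < n by lia.
rewrite (rcE _ H1 H2) ffunE /= ltnSn /= /ED eqxx.
have -> : (k == 0) = false by apply/eqP; lia.
have -> : (k == n.-2) = false by apply/eqP; lia.
by case: (kp k) => /=; rewrite ?oner_eq0 ?eqxx.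
Qed.

Definition kswap (kx ky : nat -> bool) c k := if k <= c then kx k else ky k.

Lemma swap_nat n (kx ky : nat -> bool) c i j : 0 < c < n.-2 -> kx c -> ky c -> i < j -> j < n ->
  (ED n (kswap kx ky c) i j : nat) + ED n (kswap ky kx c) i j
  = (ED n kx i j : nat) + ED n ky i j.
Proof.
move=> Hc kxc kyc ij jn; rewrite /ED; case: (j =P i.+1) => [ji|/eqP ji].
  rewrite /kswap; case: (leqP i c) => _ //; by rewrite addnC.
have pq : i <= j.-1 by lia.
case: (leqP j.-1 c) => Hq.
  rewrite (@arcb_ext n (kswap kx ky c) kx) // ?(@arcb_ext n (kswap ky kx c) ky) //.
    by move=> k Hk; rewrite /cutp /kswap (_ : k <= c) //; lia.
  by move=> k Hk; rewrite /cutp /kswap (_ : k <= c) //; lia.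
case: (leqP c i) => Hp.
  have cut_eq : forall (k1 k2 : nat -> bool) k, k1 c -> k2 c -> c <= k ->
      cutp n (kswap k1 k2 c) k = cutp n k2 k.
    move=> k1 k2 k k1c k2c Hk; rewrite /cutp /kswap; case: (leqP k c) => // kc.
    have -> : k = c by lia.
    by rewrite k1c k2c !orbT.
  rewrite (@arcb_ext n (kswap kx ky c) ky) //; last by move=> k Hk; apply: cut_eq => //; lia.
  rewrite (@arcb_ext n (kswap ky kx c) kx) //; last by move=> k Hk; apply: cut_eq => //; lia.
  by rewrite addnC.
have Hpc : i < c < j.-1 by lia.
have c1 : cutp n (kswap kx ky c) c by rewrite /cutp /kswap leqnn kxc !orbT.
have c2 : cutp n (kswap ky kx c) c by rewrite /cutp /kswap leqnn kyc !orbT.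
have c3 : cutp n kx c by rewrite /cutp kxc !orbT.
have c4 : cutp n ky c by rewrite /cutp kyc !orbT.
by rewrite (arcb_cross c1 Hpc) (arcb_cross c2 Hpc) (arcb_cross c3 Hpc) (arcb_cross c4 Hpc).
Qed.

Definition adjn (L : seq nat) u w := exists m, m.+1 < size L /\ nth 0 L m = u /\ nth 0 L m.+1 = w.

Lemma sorted_adj L u w : sorted ltn L -> adjn L u w ->
  u < w /\ forall v : nat, v \in L -> ~~ (u < v < w).
Proof.
move=> sL [m [Hm [Hu Hw]]].
have H := sorted_ltn_nth ltn_trans 0 sL.
have Hl : forall i j, i < size L -> j < size L -> i < j -> nth 0 L i < nth 0 L j.
  by move=> i j Hi Hj Hij; apply: H.
split; first by rewrite -Hu -Hw; apply: Hl => //; lia.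
move=> v vL; have Ev := nth_index 0 vL; have Hk := (index_mem v L); rewrite vL in Hk.
set k := index v L in Hk Ev.
case: (ltngtP k m) => Hkm.
- have := Hl _ _ Hk (ltnW Hm) Hkm; rewrite Hu Ev; lia.
- have : (m.+1 < k) || (m.+1 == k) by lia.
  case/orP => [H1|/eqP E]; last by move: Ev; rewrite -E Hw => ->; lia.
  have := Hl _ _ Hm Hk H1; rewrite Hw Ev; lia.
- by move: Ev; rewrite Hkm Hu => <-; lia.
Qed.

Lemma adj_sorted L u w : sorted ltn L -> u \in L -> w \in L -> u < w ->
  (forall v : nat, v \in L -> ~~ (u < v < w)) -> adjn L u w.
Proof.
move=> sL uL wL uw Hb.
have H := sorted_ltn_nth ltn_trans 0 sL.
have Hl : forall i j, i < size L -> j < size L -> i < j -> nth 0 L i < nth 0 L j.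
  by move=> i j Hi Hj Hij; apply: H.
have Hm := index_mem u L; rewrite uL in Hm.
have Hm' := index_mem w L; rewrite wL in Hm'.
have Eu := nth_index 0 uL; have Ew := nth_index 0 wL.
set m := index u L in Hm Eu; set m' := index w L in Hm' Ew.
have mm' : m < m'.
  case: (ltngtP m m') => // H1.
    by have := Hl _ _ Hm' Hm H1; rewrite Eu Ew; lia.
  by move: Eu; rewrite H1 Ew => E; rewrite E ltnn in uw.
have : (m.+1 == m') || (m.+1 < m') by lia.
case/orP => [/eqP E|H1].
  by exists m; split; [rewrite E | rewrite E].
have h1 : u < nth 0 L m.+1 by rewrite -Eu; apply: Hl => //; apply: ltn_trans H1 Hm'.
have h2 : nth 0 L m.+1 < w by rewrite -Ew; apply: Hl => //; apply: ltn_trans H1 Hm'.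
by move/negP: (Hb _ (mem_nth 0 (ltn_trans H1 Hm'))); rewrite h1 h2.
Qed.

Lemma adjn_rev L u w : adjn L u w -> adjn (rev L) w u.
Proof.
move=> [m [Hm [Hu Hw]]]; exists (size L - m.+2); rewrite size_rev.
split; first lia.
rewrite !nth_rev; try lia.
have -> : size L - (size L - m.+2).+1 = m.+1 by lia.
by have -> : size L - (size L - m.+2).+2 = m by lia.
Qed.

Lemma adjn_revE L u w : adjn (rev L) u w <-> adjn L w u.
Proof.
split; last exact: adjn_rev.
by move/adjn_rev; rewrite revK.
Qed.

Lemma adjn_cat A z B u w :
  adjn (A ++ z :: B) u w <-> adjn (rcons A z) u w \/ adjn (z :: B) u w.
Proof.
split.
  move=> [m [Hm [Hu Hw]]]; rewrite size_cat /= in Hm.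
  case: (ltnP m (size A)) => HmA.
    left; exists m; rewrite size_rcons !nth_rcons; split; first lia.
    rewrite HmA; move: Hu Hw; rewrite !nth_cat HmA => -> Hw; split => //.
    case: (ltnP m.+1 (size A)) => H1; first by rewrite H1 in Hw.
    have E : m.+1 = size A by lia.
    by rewrite E eqxx; move: Hw; rewrite E ltnn subnn.
  right; exists (m - size A); split; first by rewrite /=; lia.
  move: Hu Hw; rewrite !nth_cat ltnNge HmA /= ltnNge (leqW HmA) /=.
  by have -> : m.+1 - size A = (m - size A).+1 by lia.
case=> [[m [Hm [Hu Hw]]]|[m [Hm [Hu Hw]]]].
  rewrite size_rcons in Hm; exists m; rewrite size_cat /=; split; first lia.
  move: Hu Hw; rewrite !nth_rcons !nth_cat.
  have -> : m < size A by lia.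
  move=> -> Hw; split => //.
  case: (ltnP m.+1 (size A)) => H1; first by rewrite H1 in Hw.
  have E : m.+1 = size A by lia.
  by move: Hw; rewrite E ltnn eqxx subnn.
exists (size A + m); rewrite size_cat; split; first by move: Hm => /=; lia.
rewrite !nth_cat (_ : (size A + m < size A) = false); last by lia.
rewrite (_ : ((size A + m).+1 < size A) = false); last by lia.
by rewrite addKn -addnS addKn.
Qed.

Lemma next_adjn x t u : uniq (x :: t) -> u \in x :: t ->
  adjn (rcons (x :: t) x) u (next (x :: t) u).
Proof.
move=> U ut; rewrite next_nth ut.
have Hm := index_mem u (x :: t); rewrite ut in Hm.
set m := index u (x :: t) in Hm *.
exists m; rewrite size_rcons; split; first by rewrite ltnS.
rewrite nth_rcons Hm nth_index //; split => //.
rewrite [rcons _ _]/= /= nth_rcons.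
case: (ltnP m (size t)) => H1; first exact: set_nth_default.
have E : m = size t by apply/eqP; rewrite eqn_leq H1 andbT -ltnS.
by rewrite E eqxx nth_default.
Qed.

Lemma adjn_next x t u w : uniq (x :: t) ->
  adjn (rcons (x :: t) x) u w -> next (x :: t) u = w.
Proof.
move=> U [m [Hm [Hu Hw]]]; rewrite size_rcons in Hm.
have Hm' : m < size (x :: t) by rewrite -ltnS.
move: Hu; rewrite nth_rcons Hm' => Hu.
have ut : u \in x :: t by rewrite -Hu mem_nth.
rewrite next_nth ut -Hu index_uniq //.
move: Hw; rewrite [rcons _ _]/= /= nth_rcons.
case: (ltnP m (size t)) => H1; first by move=> <-; apply: set_nth_default.
have E : m = size t by apply/eqP; rewrite eqn_leq H1 andbT -ltnS.
by rewrite E eqxx nth_default.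
Qed.

Definition mL n (sg : nat -> bool) (tau : bool) (v : nat) :=
  (v == 0) || (v == n.-1) || (sg v == tau).
Definition kap (sg : nat -> bool) (k : nat) := sg k != sg k.+1.

Lemma mL_int n sg tau (v : nat) : 0 < v -> v < n.-1 -> mL n sg tau v = (sg v == tau).
Proof.
move=> v0 vn; rewrite /mL.
have -> : (v == 0) = false by apply/eqP; lia.
by have -> : (v == n.-1) = false by apply/eqP; lia.
Qed.

Lemma const_run n sg (i j : nat) : i.+1 < j ->
  (forall k : nat, i < k < j.-1 -> ~~ cutp n (kap sg) k) ->
  forall v : nat, i < v < j -> sg v = sg i.+1.
Proof.
move=> ij H v /andP [iv vj].
have : forall d : nat, i.+1 + d < j -> sg (i.+1 + d) = sg i.+1.
  elim=> [|d IH] Hd; first by rewrite addn0.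
  have := H (i.+1 + d) ltac:(lia); rewrite /cutp /kap negb_or => /andP [_].
  by rewrite negbK addnS => /eqP <-; apply: IH; lia.
move=> /(_ (v - i.+1)); have -> : i.+1 + (v - i.+1) = v by lia.
by apply; lia.
Qed.

Lemma sides_ED n sg (i j : nat) : 3 <= n -> i < j -> j < n ->
  (exists tau, [/\ mL n sg tau i, mL n sg tau j &
     forall v : nat, i < v < j -> ~~ mL n sg tau v]) <-> ED n (kap sg) i j.
Proof.
move=> n3 ij jn; rewrite /ED; case: (j =P i.+1) => [ji|/eqP ji].
  subst j; split.
    move=> [tau [Hi Hj _]].
    case: (i =P 0) => //= /eqP i0; case: (i =P n.-2) => //= /eqP in2.
    move: Hi Hj; rewrite !mL_int; try lia.
    by rewrite /kap => /eqP -> /eqP ->; rewrite eqxx.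
  case: (i =P 0) => [->|/eqP i0] /= H.
    exists (sg 1); split; rewrite /mL ?eqxx ?orbT //.
    by move=> v; lia.
  case: (i =P n.-2) => [E|/eqP in2] /= in H.
    exists (sg i); split; rewrite /mL ?eqxx ?orbT //.
      have -> : i.+1 = n.-1 by lia.
      by rewrite eqxx orbT.
    by move=> v; lia.
  exists (sg i); split; rewrite /mL ?eqxx ?orbT //.
    by move: H; rewrite /kap negbK => /eqP ->; rewrite eqxx !orbT.
  by move=> v; lia.
have i2j : i.+1 < j by lia.
split.
  move=> [tau [Hi Hj Hb]].
  have Hin : forall v : nat, i < v < j -> sg v = ~~ tau.
    move=> v Hv; have := Hb v Hv; rewrite mL_int; [by case: (sg v); case: (tau) | lia | lia].
  apply/and3P; split.
  - rewrite /cutp; case: (i =P 0) => //= /eqP i0.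
    have -> : (i == n.-2) = false by apply/eqP; lia.
    move: Hi; rewrite mL_int; try lia.
    by rewrite /kap (Hin i.+1) ?leqnn //; try lia; move=> /eqP ->; case: (tau).
  - rewrite /cutp; case: (j.-1 =P 0) => //= /eqP j0.
    case: (j.-1 =P n.-2) => //= /eqP jn2.
    move: Hj; rewrite mL_int; try lia.
    rewrite /kap (Hin j.-1); try lia.
    have -> : j.-1.+1 = j by lia.
    by move=> /eqP ->; case: (tau).
  - apply/allP => k; rewrite mem_iota => Hk.
    rewrite /cutp.
    have -> : (k == 0) = false by apply/eqP; lia.
    have -> : (k == n.-2) = false by apply/eqP; lia.
    by rewrite /kap (Hin k) ?(Hin k.+1) ?eqxx //; lia.
move=> /and3P [ci cj /allP ca].
have Hc : forall v : nat, i < v < j -> sg v = sg i.+1.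
  apply: const_run => // k Hk; apply: ca; rewrite mem_iota; lia.
exists (~~ sg i.+1); split.
- move: ci; rewrite /cutp /mL; case: (i =P 0) => //= /eqP i0.
  have -> : (i == n.-2) = false by apply/eqP; lia.
  have -> : (i == n.-1) = false by apply/eqP; lia.
  by rewrite /kap /=; case: (sg i); case: (sg i.+1).
- move: cj; rewrite /cutp /mL; case: (j.-1 =P 0) => [|/eqP j0]; first lia.
  case: (j =P n.-1) => [->|/eqP jn1]; rewrite ?eqxx ?orbT //=.
  have -> : (j.-1 == n.-2) = false by apply/eqP; lia.
  have -> : (j == 0) = false by apply/eqP; lia.
  rewrite /kap (Hc j.-1); try lia.
  have -> : j.-1.+1 = j by lia.
  by case: (sg j); case: (sg i.+1).
- move=> v Hv; rewrite mL_int; try lia.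
  by rewrite (Hc v Hv); case: (sg i.+1).
Qed.

Lemma pyr_edge n (a b : seq nat) (i j : nat) :
  let s := 0 :: a ++ n.-1 :: b in
  3 <= n -> perm_eq s (iota 0 n) -> sorted ltn a -> sorted [rel x y | (y < x)%N] b ->
  i < j -> j < n -> tour_edge s i j = ED n (kap (fun v => v \in a)) i j.
Proof.
move=> s n3 ps sa sb ij jn.
have U : uniq s by rewrite (perm_uniq ps) iota_uniq.
have memS : forall v : nat, (v \in s) = (v < n).
  by move=> v; rewrite (perm_mem ps) mem_iota.
have Us := U; rewrite /s /= mem_cat inE negb_or cat_uniq /= negb_or in Us.
case/and5P: Us => /and3P [a0 n10 b0] ua /norP [an1 hab] bn1 ub.
have ab : forall v : nat, v \in a -> v \notin b.
  by move=> v va; apply/negP => vb; move/hasPn: hab => /(_ v vb); rewrite va.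
have arange : forall v : nat, v \in a -> 0 < v < n.-1.
  move=> v va; have : v < n by rewrite -memS /s inE mem_cat va orbT.
  have : v != 0 by apply/eqP => E; move: a0; rewrite -E va.
  have : v != n.-1 by apply/eqP => E; move: an1; rewrite -E va.
  clia.
have brange : forall v : nat, v \in b -> 0 < v < n.-1.
  move=> v vb; have : v < n by rewrite -memS /s inE mem_cat inE vb !orbT.
  have : v != 0 by apply/eqP => E; move: b0; rewrite -E vb.
  have : v != n.-1 by apply/eqP => E; move: bn1; rewrite -E vb.
  clia.
pose Lt := 0 :: rcons a n.-1.
pose Lf := 0 :: rcons (rev b) n.-1.
have sLt : sorted ltn Lt.
  rewrite (sorted_pairwise ltn_trans) /Lt /= pairwise_rcons -(sorted_pairwise ltn_trans) sa.
  rewrite all_rcons andbT -andbA; apply/and3P; split.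
  - by move: n3; clia.
  - by apply/allP => v /arange /=; clia.
  - by apply/allP => v /arange; clia.
have sLf : sorted ltn Lf.
  rewrite (sorted_pairwise ltn_trans) /Lf /= pairwise_rcons -(sorted_pairwise ltn_trans).
  rewrite rev_sorted all_rcons -andbA; apply/and4P; split.
  - by move: n3; clia.
  - by apply/allP => v; rewrite mem_rev => /brange /=; clia.
  - by apply/allP => v; rewrite mem_rev => /brange; clia.
  - exact: sb.
have memLt : forall v : nat, (v \in Lt) = mL n (fun v => v \in a) true v.
  move=> v; rewrite /Lt /mL inE mem_rcons inE eqb_id.
  by case: (v == 0); case: (v == n.-1); case: (v \in a).
have memLf : forall v : nat, v < n -> (v \in Lf) = mL n (fun v => v \in a) false v.
  move=> v vn; have : v \in s by rewrite memS.
  rewrite /Lf /mL /s !inE mem_rcons inE mem_rev mem_cat inE.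
  case: (v =P 0) => //= _; case: (v =P n.-1) => //= _.
  case/orP => [va|vb]; first by rewrite va (negbTE (ab _ va)).
  by case va: (v \in a); [move: (ab _ va); rewrite vb | rewrite vb].
have CLt : forall u w : nat, u < w -> w < n -> adjn Lt u w <->
    (exists2 tau, tau = true & [/\ mL n (fun v => v \in a) tau u,
       mL n (fun v => v \in a) tau w &
       forall v : nat, u < v < w -> ~~ mL n (fun v => v \in a) tau v]).
  move=> u w uw wn; split.
    move=> H; have [_ Hb] := sorted_adj sLt H.
    exists true => //; split; rewrite -?memLt.
    - by case: H => m [Hm [<- _]]; apply: mem_nth; apply: ltnW.
    - by case: H => m [Hm [_ <-]]; apply: mem_nth.
    - move=> v Hv; rewrite -memLt; apply/negP => vL; by move: (Hb v vL); rewrite Hv.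
  move=> [tau -> [Hu Hw Hb]]; apply: adj_sorted => //; rewrite ?memLt //.
  by move=> v; rewrite memLt => Hv; apply/negP => Hv'; move: (Hb v Hv'); rewrite Hv.
have CLf : forall u w : nat, u < w -> w < n -> adjn Lf u w <->
    (exists2 tau, tau = false & [/\ mL n (fun v => v \in a) tau u,
       mL n (fun v => v \in a) tau w &
       forall v : nat, u < v < w -> ~~ mL n (fun v => v \in a) tau v]).
  move=> u w uw wn; split.
    move=> H; have [_ Hb] := sorted_adj sLf H.
    have un : u < n := ltn_trans uw wn.
    exists false => //; split.
    - by rewrite -memLf //; case: H => m [Hm [<- _]]; apply: mem_nth; apply: ltnW.
    - by rewrite -memLf //; case: H => m [Hm [_ <-]]; apply: mem_nth.
    - move=> v Hv; have vn : v < n := ltn_trans (andP Hv).2 wn.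
      by rewrite -memLf //; apply/negP => vL; move: (Hb v vL); rewrite Hv.
  move=> [tau -> [Hu Hw Hb]]; have un : u < n := ltn_trans uw wn.
  apply: adj_sorted => //; rewrite ?memLf //.
  move=> v vL; apply/negP => Hv'; have vn : v < n := ltn_trans (andP Hv').2 wn.
  by move: (Hb v Hv'); rewrite -memLf // vL.
have Crs : rcons s 0 = (0 :: a) ++ n.-1 :: rcons b 0.
  by rewrite /s rcons_cons rcons_cat.
have revLf : rev Lf = n.-1 :: rcons b 0.
  by rewrite /Lf rev_cons rev_rcons revK rcons_cons.
have nxt : forall u w : nat, u < n ->
    (w == next s u) <-> adjn Lt u w \/ adjn Lf w u.
  move=> u w un; have us : u \in s by rewrite memS.
  have E : forall w', adjn (rcons s 0) u w' <-> adjn Lt u w' \/ adjn Lf w' u.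
    by move=> w'; rewrite Crs adjn_cat -revLf adjn_revE.
  split.
    by move=> /eqP ->; apply/E; apply: next_adjn.
  by move=> /E H; rewrite (adjn_next U H).
have jn' : i < n := ltn_trans ij jn.
rewrite /tour_edge; apply/idP/idP.
  case/orP => [/(nxt _ _ jn') [H|H] | /(nxt _ _ jn) [H|H]].
  - apply/(sides_ED _ n3 ij jn); have [tau -> Hs] := (CLt _ _ ij jn).1 H.
    by exists true.
  - by have := (sorted_adj sLf H).1; rewrite ltnNge (ltnW ij).
  - by have := (sorted_adj sLt H).1; rewrite ltnNge (ltnW ij).
  - apply/(sides_ED _ n3 ij jn); have [tau -> Hs] := (CLf _ _ ij jn).1 H.
    by exists false.
move/(sides_ED _ n3 ij jn) => [[] Hs].
  by apply/orP; left; apply/(nxt _ _ jn'); left; apply/(CLt _ _ ij jn); exists true.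
by apply/orP; right; apply/(nxt _ _ jn); right; apply/(CLf _ _ ij jn); exists false.
Qed.

Lemma pyr_charvec (R : realFieldType) n (a b : seq nat) :
  let s := 0 :: a ++ n.-1 :: b in
  3 <= n -> perm_eq s (iota 0 n) -> sorted ltn a -> sorted [rel x y | (y < x)%N] b ->
  charvec R n s = CVc R n (kap (fun v => v \in a)).
Proof.
move=> s n3 ps sa sb; apply/ffunP => -[i j]; rewrite !ffunE /=.
case: (ltnP i j) => //= ij.
by rewrite (pyr_edge n3 ps sa sb ij (ltn_ord j)).
Qed.

Lemma pyr_CVc (R : realFieldType) n s : pyramidal n s ->
  exists kp, charvec R n s = CVc R n kp.
Proof.
move=> [n3 [ps [a [b [Es [sa sb]]]]]]; subst s.
by exists (kap (fun v => v \in a)); apply: pyr_charvec.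
Qed.

Definition sgk (kp : nat -> bool) (v : nat) := odd (count kp (iota 1 v.-1)).

Lemma sgk_kap kp (k : nat) : 0 < k -> kap (sgk kp) k = kp k.
Proof.
move=> k0; rewrite /kap /sgk /=.
have -> : iota 1 k = iota 1 k.-1 ++ [:: k].
  have {1}-> : k = k.-1 + 1 by lia.
  by rewrite iotaD; congr (_ ++ _); rewrite /=; congr [:: _]; lia.
rewrite count_cat /= addn0 oddD.
by case: (odd _); case: (kp k).
Qed.

Lemma CVc_real (R : realFieldType) n kp : 3 <= n ->
  exists s, pyramidal n s /\ charvec R n s = CVc R n kp.
Proof.
move=> n3.
pose I := iota 1 n.-2.
pose a := filter (sgk kp) I.
pose b := rev (filter (predC (sgk kp)) I).
exists (0 :: a ++ n.-1 :: b).
have sa : sorted ltn a by apply: sorted_filter => //; [exact: ltn_trans | exact: iota_ltn_sorted].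
have sb : sorted [rel x y | (y < x)%N] b.
  rewrite /b rev_sorted; apply: sorted_filter; first by move=> x y z /= H1 H2; lia.
  exact: iota_ltn_sorted.
have ps : perm_eq (0 :: a ++ n.-1 :: b) (iota 0 n).
  have -> : iota 0 n = 0 :: (I ++ [:: n.-1]).
    have {1}-> : n = 1 + (n.-2 + 1) by clear -n3; lia.
    rewrite iotaD iotaD /=; congr (_ :: _ ++ _).
    by rewrite /=; congr [:: _]; clear -n3; lia.
  rewrite perm_cons -cat1s perm_catCA perm_sym perm_catC perm_sym /= perm_cons.
  rewrite perm_sym -(perm_filterC (sgk kp) I) /a /b perm_cat2l perm_sym perm_rev //.
split.
  split => //; split => //; by exists a, b.
rewrite pyr_charvec //; apply: CVc_ext => k Hk.
have ma : forall v : nat, 0 < v < n.-1 -> (v \in a) = sgk kp v.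
  move=> v Hv; rewrite /a mem_filter mem_iota.
  by rewrite (_ : 1 <= v < 1 + n.-2) ?andbT //; clear -Hv; lia.
rewrite /kap ma ?ma; try (clear -Hk; lia).
by rewrite -/(kap (sgk kp) k) sgk_kap //; case/andP: Hk.
Qed.

Lemma PYR_iff (R : realFieldType) n (v : {ffun 'I_n * 'I_n -> R}) : 3 <= n ->
  PYRpts v <-> exists kp, v = CVc R n kp.
Proof.
move=> n3; split.
  by move=> [s [ps ->]]; apply: pyr_CVc.
move=> [kp ->]; have [s [ps E]] := CVc_real R kp n3.
by exists s; split.
Qed.

Lemma PYR_rc (R : realFieldType) n (v : {ffun 'I_n * 'I_n -> R}) : 3 <= n ->
  PYRpts v -> v = CVc R n (rc v).
Proof.
move=> n3 /(PYR_iff _ n3) [kp ->]; apply: CVc_ext => k Hk.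
by rewrite rc_CVc.
Qed.

Lemma sum_lt (R : realFieldType) (I : finType) (P : pred I) (F G : I -> R) e0 :
  P e0 -> (F e0 < G e0)%R -> (forall e, P e -> (F e <= G e)%R) ->
  (\sum_(e | P e) F e < \sum_(e | P e) G e)%R.
Proof.
move=> Pe0 lt le; rewrite (bigD1 e0) //= [X in (_ < X)%R](bigD1 e0) //=.
apply: ltr_leD => //; apply: ler_sum => e /andP [Pe _]; exact: le.
Qed.

Lemma ffun_diff (R : realFieldType) n (x y : {ffun 'I_n * 'I_n -> R}) :
  x != y -> exists e, x e != y e.
Proof.
move=> Hne; case: (boolP [exists e, x e != y e]) => [/existsP //|/existsPn H].
by case/eqP: Hne; apply/ffunP => e; apply/eqP; move: (H e); rewrite negbK.
Qed.

Lemma CVc_diff (R : realFieldType) n k1 k2 :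
  CVc R n k1 != CVc R n k2 ->
  exists e : 'I_n * 'I_n, (e.1 < e.2) && (ED n k1 e.1 e.2 != ED n k2 e.1 e.2).
Proof.
move=> /ffun_diff [e]; rewrite !CVcE; case: (ltnP e.1 e.2) => /= H.
  by move=> He; exists e; rewrite H /=; apply: contra He => /eqP ->.
by rewrite eqxx.
Qed.

Lemma vertexCV (R : realFieldType) n kp : 3 <= n -> is_vertex (@PYRpts R n) (CVc R n kp).
Proof.
move=> n3; split; first by apply/(PYR_iff _ n3); exists kp.
exists [ffun e => (2%:R * CVc R n kp e - 1)%R].
move=> z /(PYR_iff _ n3) [kz ->] Hne.
have [e0 /andP [H0 Hd]] := CVc_diff Hne.
rewrite /dotE; apply: (sum_lt (e0 := e0)) => //.
  rewrite !ffunE H0 /=; move: Hd.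
  by case: (ED n kz _ _); case: (ED n kp _ _) => //= _; lra.
move=> e He; rewrite !ffunE He /=.
by case: (ED n kz _ _); case: (ED n kp _ _) => /=; lra.
Qed.

Definition kij (i j : nat) (k : nat) := (k == i) || (k == j).
Definition nc n (kp : nat -> bool) (p : nat) := p.+1 + find (cutp n kp) (iota p.+1 (n.-2 - p)).

Lemma nc_spec n kp (p : nat) : p < n.-2 ->
  [/\ p < nc n kp p, nc n kp p <= n.-2, cutp n kp (nc n kp p) &
      forall k : nat, p < k < nc n kp p -> ~~ cutp n kp k].
Proof.
move=> pn; rewrite /nc; set f := find _ _.
have hs : has (cutp n kp) (iota p.+1 (n.-2 - p)).
  apply/hasP; exists n.-2; last by rewrite /cutp eqxx orbT.
  by rewrite mem_iota; apply/andP; split; [exact: pn | clear f; lia].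
have fs : f < n.-2 - p by rewrite -(size_iota p.+1 (n.-2 - p)) -has_find.
split.
- by clear -fs; lia.
- by clear -fs pn; lia.
- by move: (nth_find 0 hs); rewrite -/f nth_iota.
- move=> k /andP [pk kq].
  have Hkf : k - p.+1 < f by clear -kq pk; lia.
  have := before_find 0 Hkf; rewrite nth_iota; last by clear -Hkf fs; lia.
  have -> : p.+1 + (k - p.+1) = k by clear -pk; lia.
  by move=> ->.
Qed.

Lemma nc_arc n kp (p : nat) : p < n.-2 -> cutp n kp p -> arcb n kp p (nc n kp p).
Proof.
move=> pn cp; have [H1 H2 H3 H4] := nc_spec kp pn.
rewrite /arcb cp H3 /=; apply/allP => k; rewrite mem_iota => Hk; apply: H4.
by clear -Hk H1; lia.
Qed.

Lemma ED_arc n kp (p q : nat) : p < q -> ED n kp p q.+1 = arcb n kp p q.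
Proof. by move=> pq; rewrite /ED eqSS (_ : (q == p) = false) //; apply/eqP; clear -pq; lia. Qed.

Lemma arcb_kij n (i j p q : nat) : 0 < i < j -> j < n.-2 -> p < q -> q <= n.-2 ->
  arcb n (kij i j) p q ->
  [|| (p == 0) && (q == i), (p == i) && (q == j) | (p == j) && (q == n.-2)].
Proof.
move=> Hij jn pq qn /and3P [cp cq /allP ca].
have ni : ~~ (p < i < q).
  apply/negP => Hi; have := ca i; rewrite mem_iota /cutp /kij eqxx !orbT /=.
  by move=> /(_ ltac:(clear -Hi; lia)).
have nj : ~~ (p < j < q).
  apply/negP => Hj; have := ca j; rewrite mem_iota /cutp /kij eqxx !orbT /=.
  by move=> /(_ ltac:(clear -Hj; lia)).
move: cp cq; rewrite /cutp /kij.
clear ca; lia.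
Qed.

Lemma cutp_int n kp (k : nat) : 0 < k < n.-2 -> cutp n kp k = kp k.
Proof.
move=> Hk; rewrite /cutp.
have -> : (k == 0) = false by apply/eqP; clear -Hk; lia.
by have -> : (k == n.-2) = false by apply/eqP; clear -Hk; lia.
Qed.

Lemma kz_det n kz (a b : nat) : 0 < a -> a < b -> b < n.-2 ->
  nc n kz 0 = a -> nc n kz a = b -> nc n kz b = n.-2 ->
  forall k : nat, 0 < k < n.-2 -> kz k = kij a b k.
Proof.
move=> a0 ab bn E1 E2 E3 k Hk.
have n0 : 0 < n.-2 by clear -a0 ab bn; lia.
have an : a < n.-2 by clear -ab bn; lia.
have [_ _ c1 h1] := nc_spec kz n0.
have [_ _ c2 h2] := nc_spec kz an.
have [_ _ _ h3] := nc_spec kz bn.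
rewrite E1 in c1 h1; rewrite E2 in c2 h2; rewrite E3 in h3.
rewrite /kij -(cutp_int kz Hk).
case: (ltngtP k a) => ka.
- have -> : (k == b) = false by apply/eqP; clear -ka ab; lia.
  by apply/negbTE/h1; clear -Hk ka; lia.
- case: (ltngtP k b) => kb.
  + by apply/negbTE/h2; clear -kb ka; lia.
  + by apply/negbTE/h3; clear -kb Hk; lia.
  + by rewrite kb c2.
- by rewrite ka c1.
Qed.

Lemma lb_comb n (i j i' j' h : nat) kz : 3 <= n ->
  0 < i <= h -> h < j < n.-2 -> 0 < i' <= h -> h < j' < n.-2 ->
  (forall p q : nat, p < q -> q < n -> ED n kz p q ->
     ED n (kij i j) p q || ED n (kij i' j') p q) ->
  (forall k : nat, 0 < k < n.-2 -> kz k = kij i j k) \/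
  (forall k : nat, 0 < k < n.-2 -> kz k = kij i' j' k).
Proof.
move=> n3 Hi Hj Hi' Hj' Hc.
have step : forall p : nat, p < n.-2 -> cutp n kz p ->
    arcb n (kij i j) p (nc n kz p) || arcb n (kij i' j') p (nc n kz p).
  move=> p pn cp; have [H1 H2 H3 H4] := nc_spec kz pn.
  rewrite -!ED_arc //; apply: Hc.
  - by clear -H1; lia.
  - by clear -H2 n3; lia.
  - by rewrite ED_arc //; apply: nc_arc.
have tri : forall p q : nat, p < q -> q <= n.-2 ->
    arcb n (kij i j) p q || arcb n (kij i' j') p q ->
    [|| (p == 0) && (q == i), (p == i) && (q == j) | (p == j) && (q == n.-2)] ||
    [|| (p == 0) && (q == i'), (p == i') && (q == j') | (p == j') && (q == n.-2)].
  move=> p q pq qn /orP [H|H].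
    by rewrite (arcb_kij _ _ pq qn H) //; clear -Hi Hj; lia.
  by rewrite (arcb_kij _ _ pq qn H) ?orbT //; clear -Hi' Hj'; lia.
have n0 : 0 < n.-2 by clear -n3; lia.
have c0 : cutp n kz 0 by rewrite /cutp eqxx.
have [a1 a2 a3 _] := nc_spec kz n0.
have T1 := tri _ _ a1 a2 (step _ n0 c0).
set a := nc n kz 0 in a1 a2 a3 T1.
have an : a < n.-2 by clear -T1 Hi Hj Hi' Hj'; lia.
have [b1 b2 b3 _] := nc_spec kz an.
have T2 := tri _ _ b1 b2 (step _ an a3).
set b := nc n kz a in b1 b2 b3 T2.
have bn : b < n.-2 by clear -T1 T2 Hi Hj Hi' Hj'; lia.
have [c1 c2 c3 _] := nc_spec kz bn.
have T3 := tri _ _ c1 c2 (step _ bn b3).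
set c := nc n kz b in c1 c2 c3 T3.
have cn : c = n.-2 by clear -T1 T2 T3 Hi Hj Hi' Hj' c2; lia.
have a0 : 0 < a by clear -a1; lia.
have := kz_det a0 b1 bn (erefl _) (erefl _) cn.
have : ((a == i) && (b == j)) || ((a == i') && (b == j')).
  by clear -T1 T2 Hi Hj Hi' Hj'; lia.
case/orP => /andP [/eqP -> /eqP ->] H; [left | right]; exact: H.
Qed.

Lemma lb_adjacent (R : realFieldType) n (i j i' j' h : nat) : 3 <= n ->
  0 < i <= h -> h < j < n.-2 -> 0 < i' <= h -> h < j' < n.-2 -> (i, j) != (i', j') ->
  adjacent (@PYRpts R n) (CVc R n (kij i j)) (CVc R n (kij i' j')).
Proof.
move=> n3 Hi Hj Hi' Hj' Hne.
set x := CVc R n (kij i j); set y := CVc R n (kij i' j').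
have xy : x != y.
  apply/eqP => E; move/eqP: Hne; apply.
  have Ei := congr1 (fun v => rc v i) E; have Ej := congr1 (fun v => rc v j) E.
  move: Ei Ej => /=; rewrite /x /y !rc_CVc; try (clear -Hi Hj Hi' Hj'; lia).
  rewrite /kij !eqxx /= orbT => /esym Ei /esym Ej.
  have -> : i = i' by clear -Ei Hi Hj'; lia.
  by have -> : j = j' by clear -Ej Hj Hi'; lia.
split => //; split; first exact: vertexCV.
split; first exact: vertexCV.
pose c := [ffun e => if (x e == 0%R) && (y e == 0%R) then (-1 : R)%R else 0%R].
have dx : dotE c x = 0%R.
  rewrite /dotE big1 // => e _; rewrite ffunE.
  by case: (x e =P 0%R) => [->|_]; rewrite ?mulr0 //= mul0r.
have dy : dotE c y = 0%R.
  rewrite /dotE big1 // => e _; rewrite ffunE.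
  by case: (y e =P 0%R) => [->|_]; rewrite ?mulr0 ?andbF //= mul0r.
exists c; split; first by rewrite dx dy.
move=> z /(PYR_iff _ n3) [kz ->] zx zy; rewrite dx.
have [e0 He0] : exists e : 'I_n * 'I_n,
    [&& e.1 < e.2, ED n kz e.1 e.2, ~~ ED n (kij i j) e.1 e.2 & ~~ ED n (kij i' j') e.1 e.2].
  case: (boolP [exists e : 'I_n * 'I_n, [&& e.1 < e.2, ED n kz e.1 e.2,
     ~~ ED n (kij i j) e.1 e.2 & ~~ ED n (kij i' j') e.1 e.2]]) => [/existsP //|/existsPn Hn].
  have Hc : forall p q : nat, p < q -> q < n -> ED n kz p q ->
      ED n (kij i j) p q || ED n (kij i' j') p q.
    move=> p q pq qn Ez; have pn : p < n by clear -pq qn; lia.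
    move: (Hn (Ordinal pn, Ordinal qn)) => /=; rewrite pq Ez /=.
    by rewrite -negb_or negbK.
  case: (lb_comb n3 Hi Hj Hi' Hj' Hc) => Hk.
    by move/eqP: zx; case; apply: CVc_ext.
  by move/eqP: zy; case; apply: CVc_ext.
case/and4P: He0 => H1 H2 H3 H4.
have -> : 0%R = (\sum_(e : 'I_n * 'I_n | (e.1 < e.2)%N) (0 : R))%R by rewrite big1.
apply: (sum_lt (e0 := e0)) => //.
  rewrite !ffunE /= H1 (negbTE H3) (negbTE H4) H2 /= eqxx /=.
  by rewrite mulr1 ltrN10.
move=> e He; rewrite ffunE CVcE; case: ifP => _; last by rewrite mul0r.
by rewrite mulN1r oppr_le0 ler0n.
Qed.

Lemma dotE_sum (R : realFieldType) n (c x y z w : {ffun 'I_n * 'I_n -> R}) :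
  (forall e, x e + y e = z e + w e)%R -> (dotE c x + dotE c y = dotE c z + dotE c w)%R.
Proof.
move=> H; rewrite /dotE -!big_split /=; apply: eq_bigr => e _.
by rewrite -!mulrDr H.
Qed.

Lemma ub_clique (R : realFieldType) n (Q : seq {ffun 'I_n * 'I_n -> R}) : 3 <= n ->
  is_clique (@PYRpts R n) Q -> size Q <= n.-2 * n.-2.
Proof.
move=> n3 [uQ [vQ aQ]].
have PQ : forall x, x \in Q -> PYRpts x by move=> x /vQ [].
have K1 : n.-2 = (n.-2.-1).+1 by clear -n3; lia.
rewrite K1; apply: (count_bound (f := fun x k => rc x k)) => //.
  move=> x y xQ yQ xy.
  case: (boolP [exists k : 'I_n, (0 < k < n.-2) && (rc x k != rc y k)]).
    move=> /existsP [k /andP [Hk Hd]]; exists k; split => //; clear -Hk; lia.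
  move=> /existsPn Hn; move/eqP: xy; case.
  rewrite (PYR_rc n3 (PQ _ xQ)) (PYR_rc n3 (PQ _ yQ)); apply: CVc_ext => k Hk.
  have kn : k < n by clear -Hk; lia.
  by move: (Hn (Ordinal kn)) => /=; rewrite Hk /= negbK => /eqP.
move=> x y xQ yQ xy c d1 d2 Hd1 Hd1c Hcd2 Hd2 rxc ryc dd1 dd2.
have [_ [_ [_ [cc [Exy Hlt]]]]] := aQ x y xQ yQ xy.
have Hc : 0 < c < n.-2 by clear -Hd1 Hd1c Hcd2 Hd2 n3; lia.
pose kz := kswap (rc x) (rc y) c; pose kw := kswap (rc y) (rc x) c.
have Pz : PYRpts (CVc R n kz) by apply/(PYR_iff _ n3); exists kz.
have Pw : PYRpts (CVc R n kw) by apply/(PYR_iff _ n3); exists kw.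
have r1 : 0 < d1 < n.-2 by clear -Hd1 Hd1c Hcd2 Hd2 n3; lia.
have r2 : 0 < d2 < n.-2 by clear -Hd1 Hd1c Hcd2 Hd2 n3; lia.
have neq : forall (u v : {ffun 'I_n * 'I_n -> R}) k, rc u k != rc v k -> u != v.
  by move=> u v k; apply: contra => /eqP ->.
have zx : CVc R n kz != x.
  apply: (neq _ _ d2); rewrite rc_CVc // /kz /kswap.
  have -> : (d2 <= c) = false by rewrite leqNgt Hcd2.
  by rewrite eq_sym.
have zy : CVc R n kz != y.
  apply: (neq _ _ d1); rewrite rc_CVc // /kz /kswap.
  by have -> : (d1 <= c) = true by apply: ltnW.
have wx : CVc R n kw != x.
  apply: (neq _ _ d1); rewrite rc_CVc // /kw /kswap.
  have -> : (d1 <= c) = true by apply: ltnW.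
  by rewrite eq_sym.
have wy : CVc R n kw != y.
  apply: (neq _ _ d2); rewrite rc_CVc // /kw /kswap.
  by have -> : (d2 <= c) = false by rewrite leqNgt Hcd2.
have Hsum := @dotE_sum R n cc x y (CVc R n kz) (CVc R n kw).
have Hs : (dotE cc x + dotE cc y = dotE cc (CVc R n kz) + dotE cc (CVc R n kw))%R.
  apply: Hsum => e.
  rewrite (PYR_rc n3 (PQ _ xQ)) (PYR_rc n3 (PQ _ yQ)) !CVcE -!natrD.
  case: (ltnP e.1 e.2) => //= He.
  by rewrite (swap_nat Hc rxc ryc He (ltn_ord _)).
have L1 := Hlt _ Pz zx zy; have L2 := Hlt _ Pw wx wy.
move: Hs L1 L2; rewrite -Exy; lra.
Qed.

Lemma half_bounds K : K./2 + K./2 <= K <= K./2 + K./2 + 1.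
Proof. have := odd_double_half K; rewrite -addnn; case: (odd K) => /= <-; lia. Qed.

Lemma lb_clique (R : realFieldType) n : 10 <= n ->
  exists Q, is_clique (@PYRpts R n) Q /\ n * n <= 64 * size Q.
Proof.
move=> n10; have n3 : 3 <= n by clear -n10; lia.
set K := n.-2.-1; set h := K./2.
pose P := [seq (i, j) | i <- iota 1 h, j <- iota h.+1 (K - h)].
pose Q := [seq CVc R n (kij pr.1 pr.2) | pr <- P].
have memP : forall pr, pr \in P -> 0 < pr.1 <= h /\ h < pr.2 < n.-2.
  move=> [i j] /allpairsP [[i' j'] [/= Hi Hj [-> ->]]].
  move: Hi Hj; rewrite !mem_iota /K /h; clear; lia.
have adjP : forall p p', p \in P -> p' \in P -> p != p' ->
    adjacent (@PYRpts R n) (CVc R n (kij p.1 p.2)) (CVc R n (kij p'.1 p'.2)).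
  move=> [i j] [i' j'] pP p'P pp'.
  have [Hi Hj] := memP _ pP; have [Hi' Hj'] := memP _ p'P.
  exact: (lb_adjacent _ n3 Hi Hj Hi' Hj' pp').
exists Q; split; last first.
  rewrite size_map size_allpairs !size_iota.
  have := half_bounds K; rewrite -/h /K; clear -n10; nia.
split.
  rewrite map_inj_in_uniq; first by apply: allpairs_uniq => //; [exact: iota_uniq | exact: iota_uniq | by move=> [? ?] [? ?] _ _ /= [-> ->]].
  move=> p p' pP p'P E; apply/eqP; apply/negP => /negP pp'.
  by have [/eqP] := adjP _ _ pP p'P pp'.
split.
  by move=> x /mapP [pr _ ->]; apply: vertexCV.
move=> x y /mapP [p pP ->] /mapP [p' p'P ->] xy.
apply: adjP => //; apply: contra xy => /eqP -> //.
Qed.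

Local Open Scope ring_scope.
Unset Implicit Arguments.

Theorem theorem6 (R : realFieldType) :
  exists (c1 c2 : R) (N : nat), 0 < c1 /\ 0 < c2 /\
    forall n : nat, (N <= n)%N ->
      (exists Q, is_clique (@PYRpts R n) Q /\ c1 * (n%:R ^+ 2) <= (size Q)%:R) /\
      (forall Q, is_clique (@PYRpts R n) Q -> (size Q)%:R <= c2 * (n%:R ^+ 2)).
Proof.
exists (64%:R)^-1, 1, 10; split; first by rewrite invr_gt0 ltr0n.
split; first exact: ltr01.
move=> n n10; split.
  have [Q [HQ Hs]] := lb_clique R n10.
  exists Q; split => //.
  rewrite mulrC ler_pdivrMr ?ltr0n // -natrX -natrM ler_nat.
  by rewrite mulnC expnS expn1.
move=> Q HQ; have := ub_clique (ltac:(clear -n10; lia) : (3 <= n)%N) HQ.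
rewrite mul1r -natrX ler_nat => H; apply: leq_trans H _.
rewrite expnS expn1; apply: leq_mul; clear; lia.
Qed.
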